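(* Let $\mathcal{I}\in\mathrm{Ins}(\Omega,\mathcal{H},\mathcal{K})$ and $\mathcal{J}\in\mathrm{Ins}(\Lambda,\mathcal{H},\mathcal{V})$ be instruments and let $\mathcal{I}^C\in\mathrm{Ins}(\Omega,\mathcal{H},\mathcal{H}_A)$ be the complementary instrument of $\mathcal{I}$ relative to any dilation $(\mathcal{H}_A,W,\mathsf{E})$ of $\mathcal{I}$. Then $\mathcal{I}$ and $\mathcal{J}$ are compatible if and only if $\mathcal{J}\preceq\mathcal{I}^C$.
   Context: All Hilbert spaces are finite-dimensional and complex, and all outcome sets are finite. A POVM $\mathsf{E}\in\mathcal{O}(\Omega,\mathcal{H})$ is a map $x\mapsto \mathsf{E}(x)$ from $\Omega$ to positive operators with $\sum_x\mathsf{E}(x)=I$. An instrument $\mathcal{I}\in\mathrm{Ins}(\Omega,\mathcal{H},\mathcal{K})$ is a family $(\mathcal{I}_x)_{x\in\Omega}$ of completely positive trace-nonincreasing linear maps $\mathcal{L}(\mathcal{H})\to\mathcal{L}(\mathcal{K})$ whose sum is trace preserving. A dilation of $\mathcal{I}$ is a triple $(\mathcal{H}_A,W,\mathsf{E})$ with $\mathcal{H}_A$ a Hilbert space, $W:\mathcal{H}\to\mathcal{H}_A\otimes\mathcal{K}$ an isometry and $\mathsf{E}\in\mathcal{O}(\Omega,\mathcal{H}_A)$, such that $\mathcal{I}_x(\varrho)=\mathrm{tr}_{\mathcal{H}_A}[W\varrho W^*(\mathsf{E}(x)\otimes I_{\mathcal{K}})]$ for all $x$ and states $\varrho$. The complementary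 instrument relative to this dilation is $\mathcal{I}^C\in\mathrm{Ins}(\Omega,\mathcal{H},\mathcal{H}_A)$, $\mathcal{I}^C_x(\varrho)=\mathrm{tr}_{\mathcal{K}}[(\sqrt{\mathsf{E}(x)}\otimes I_{\mathcal{K}})W\varrho W^*(\sqrt{\mathsf{E}(x)}\otimes I_{\mathcal{K}})]$. Postprocessing: for $\mathcal{J}\in\mathrm{Ins}(\Lambda,\mathcal{H},\mathcal{V})$ and $\mathcal{L}\in\mathrm{Ins}(\Gamma,\mathcal{H},\mathcal{W})$, $\mathcal{J}\preceq\mathcal{L}$ if there exist instruments $\mathcal{R}^{(z)}\in\mathrm{Ins}(\Lambda,\mathcal{W},\mathcal{V})$, $z\in\Gamma$, with $\mathcal{J}_y=\sum_z\mathcal{R}^{(z)}_y\circ\mathcal{L}_z$ for all $y$. Two instruments $\mathcal{I}\in\mathrm{Ins}(\Omega,\mathcal{H},\mathcal{K})$, $\mathcal{J}\in\mathrm{Ins}(\Lambda,\mathcal{H},\mathcal{V})$ are compatible if there is $\mathcal{G}\in\mathrm{Ins}(\Omega\times\Lambda,\mathcal{H},\mathcal{K}\otimes\mathcal{V})$ with $\sum_{x}\mathrm{tr}_{\mathcal{K}}[\mathcal{G}_{(x,y)}(\varrho)]=\mathcal{J}_y(\varrho)$ for all $y$ and $\sum_y\mathrm{tr}_{\mathcal{V}}[\mathcal{G}_{(x,y)}(\varrho)]=\mathcal{I}_x(\varrho)$ for all $x$, for all states $\varrho$. *)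

(* Defs.v *)
From HB Require Import structures.
From mathcomp Require Import all_boot all_order all_algebra.
From mathcomp Require Import sesquilinear spectral.
From mathcomp Require Import mxtens.
From Stdlib Require Import ClassicalEpsilon.
Set Implicit Arguments.
Unset Strict Implicit.
Unset Printing Implicit Defensive.
Import Order.TTheory GRing.Theory Num.Theory.
Local Open Scope ring_scope.
Local Open Scope sesquilinear_scope.

Section Quantum.
Variable C : numClosedFieldType.

Definition adj {m n} (A : 'M[C]_(m, n)) : 'M[C]_(n, m) := A ^t*.

Definition psd {n} (A : 'M[C]_n) : Prop :=
  forall v : 'cV[C]_n, 0 <= (adj v *m A *m v) 0 0.

Definition state {n} (rho : 'M[C]_n) : Prop := psd rho /\ \tr rho = 1.

(* the positive square root of a positive operator (unique, chosen by
   classical choice; meaningless on non-positive arguments) *)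
Definition sqrtm {n} (A : 'M[C]_n) : 'M[C]_n :=
  epsilon (inhabits 0) (fun B => psd B /\ B *m B = A).

Definition is_linear_map {n m} (Phi : 'M[C]_n -> 'M[C]_m) : Prop :=
  forall (c : C) (X Y : 'M[C]_n), Phi (c *: X + Y) = c *: Phi X + Phi Y.

(* (id_k (x) Phi) X, reference system first *)
Definition ampl {n m} (k : nat) (Phi : 'M[C]_n -> 'M[C]_m)
  (X : 'M[C]_(k * n)) : 'M[C]_(k * m) :=
  \matrix_(i, j)
    Phi (\matrix_(c, d) X (mxtens_index ((mxtens_unindex i).1, c))
                          (mxtens_index ((mxtens_unindex j).1, d)))
        (mxtens_unindex i).2 (mxtens_unindex j).2.

Definition completely_positive {n m} (Phi : 'M[C]_n -> 'M[C]_m) : Prop :=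
  forall (k : nat) (X : 'M[C]_(k * n)), psd X -> psd (ampl Phi X).

Definition trace_nonincreasing {n m} (Phi : 'M[C]_n -> 'M[C]_m) : Prop :=
  forall rho : 'M[C]_n, psd rho -> \tr (Phi rho) <= \tr rho.

Definition instrument {Omega : finType} {n m}
  (I : Omega -> 'M[C]_n -> 'M[C]_m) : Prop :=
  (forall x, is_linear_map (I x) /\ completely_positive (I x)
             /\ trace_nonincreasing (I x)) /\
  (forall X : 'M[C]_n, \tr (\sum_x I x X) = \tr X).

Definition povm {Omega : finType} {a} (E : Omega -> 'M[C]_a) : Prop :=
  (forall x, psd (E x)) /\ \sum_x E x = 1%:M.

Definition isometry {n k} (W : 'M[C]_(k, n)) : Prop := adj W *m W = 1%:M.

Definition ptr1 {a m} (M : 'M[C]_(a * m)) : 'M[C]_m :=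
  \matrix_(j, k) \sum_(i < a) M (mxtens_index (i, j)) (mxtens_index (i, k)).
Definition ptr2 {a m} (M : 'M[C]_(a * m)) : 'M[C]_a :=
  \matrix_(i, l) \sum_(j < m) M (mxtens_index (i, j)) (mxtens_index (l, j)).

Definition dilation {Omega : finType} {n m a}
  (I : Omega -> 'M[C]_n -> 'M[C]_m)
  (W : 'M[C]_(a * m, n)) (E : Omega -> 'M[C]_a) : Prop :=
  isometry W /\ povm E /\
  forall x (rho : 'M[C]_n), state rho ->
    I x rho = ptr1 (W *m rho *m adj W *m (E x *t (1%:M : 'M[C]_m))).

Definition complementary {Omega : finType} {n m a}
  (W : 'M[C]_(a * m, n)) (E : Omega -> 'M[C]_a) (x : Omega)
  (rho : 'M[C]_n) : 'M[C]_a :=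
  ptr2 ((sqrtm (E x) *t (1%:M : 'M[C]_m)) *m W *m rho *m adj W
        *m (sqrtm (E x) *t (1%:M : 'M[C]_m))).

Definition postprocessing {Lambda Gamma : finType} {n p w}
  (J : Lambda -> 'M[C]_n -> 'M[C]_p) (L : Gamma -> 'M[C]_n -> 'M[C]_w)
  : Prop :=
  exists R : Gamma -> Lambda -> 'M[C]_w -> 'M[C]_p,
    (forall z, instrument (R z)) /\
    forall y (X : 'M[C]_n), J y X = \sum_z R z y (L z X).

Definition compatible {Omega Lambda : finType} {n m p}
  (I : Omega -> 'M[C]_n -> 'M[C]_m) (J : Lambda -> 'M[C]_n -> 'M[C]_p)
  : Prop :=
  exists G : Omega * Lambda -> 'M[C]_n -> 'M[C]_(m * p),
    instrument G /\
    (forall y (rho : 'M[C]_n), state rho ->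
       \sum_x ptr1 (G (x, y) rho) = J y rho) /\
    (forall x (rho : 'M[C]_n), state rho ->
       \sum_y ptr2 (G (x, y) rho) = I x rho).

End Quantum.

(* Main.v *)
Require Import Defs.
From mathcomp Require Import all_boot all_order all_algebra.
From mathcomp Require Import sesquilinear spectral mxtens.
From mathcomp Require Import ring.
From Stdlib Require Import ClassicalEpsilon.
Import GRing.Theory Num.Theory.
Local Open Scope ring_scope.

Module Helpers.
Set Implicit Arguments. Unset Strict Implicit. Unset Printing Implicit Defensive.


Section Basics.
Variable C : numClosedFieldType.

Lemma dgE m n (A : 'M[C]_(m, n)) i j : adj A i j = (A j i)^*.
Proof. by rewrite /adj !mxE. Qed.

Lemma dgK m n (A : 'M[C]_(m, n)) : adj (adj A) = A.
Proof. by apply/matrixP=> i j; rewrite !dgE conjCK. Qed.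

Lemma dgM m n p (A : 'M[C]_(m, n)) (B : 'M[C]_(n, p)) :
  adj (A *m B) = adj B *m adj A.
Proof.
apply/matrixP=> i j; rewrite dgE !mxE rmorph_sum; apply: eq_bigr=> k _.
by rewrite !dgE rmorphM mulrC.
Qed.

Lemma dgD m n (A B : 'M[C]_(m, n)) : adj (A + B) = adj A + adj B.
Proof. by apply/matrixP=> i j; rewrite !(dgE, mxE) rmorphD. Qed.

Lemma dgN m n (A : 'M[C]_(m, n)) : adj (- A) = - adj A.
Proof. by apply/matrixP=> i j; rewrite !(dgE, mxE) rmorphN. Qed.

Lemma dgB m n (A B : 'M[C]_(m, n)) : adj (A - B) = adj A - adj B.
Proof. by rewrite dgD dgN. Qed.

Lemma dgZ m n c (A : 'M[C]_(m, n)) : adj (c *: A) = c^* *: adj A.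
Proof. by apply/matrixP=> i j; rewrite !(dgE, mxE) rmorphM. Qed.

Lemma dg0 m n : adj (0 : 'M[C]_(m, n)) = 0.
Proof. by apply/matrixP=> i j; rewrite !(dgE, mxE) rmorph0. Qed.

Lemma dg_sum (I : finType) m n (F : I -> 'M[C]_(m, n)) :
  adj (\sum_i F i) = \sum_i adj (F i).
Proof.
apply/matrixP=> i j; rewrite dgE !summxE rmorph_sum; apply: eq_bigr=> k _.
by rewrite dgE.
Qed.

Lemma dg1 n : adj (1%:M : 'M[C]_n) = 1%:M.
Proof. by apply/matrixP=> i j; rewrite !(dgE, mxE) rmorph_nat eq_sym. Qed.

Lemma dg_diag n (d : 'rV[C]_n) : adj (diag_mx d) = diag_mx (\row_i (d 0 i)^*).
Proof.
apply/matrixP=> i j; rewrite !(dgE, mxE) eq_sym.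
by case: eqP => [->|_]; rewrite ?mulr1n ?mulr0n ?rmorph0.
Qed.

Lemma dg_tens m n p q (A : 'M[C]_(m, n)) (B : 'M[C]_(p, q)) :
  adj (A *t B) = adj A *t adj B.
Proof. by apply/matrixP=> i j; rewrite !(dgE, mxE) rmorphM. Qed.

Lemma mxE11 m (u : 'rV[C]_m) (v : 'cV[C]_m) : (u *m v) 0 0 = \sum_i u 0 i * v i 0.
Proof. by rewrite mxE. Qed.

End Basics.

Section Psd.
Variable C : numClosedFieldType.

Lemma dg_delta m n (i : 'I_m) (j : 'I_n) :
  adj (delta_mx i j : 'M[C]_(m, n)) = delta_mx j i.
Proof.
apply/matrixP=> k l; rewrite dgE !mxE rmorph_nat.
by rewrite andbC.
Qed.

Lemma qf_e n (A : 'M[C]_n) i j :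
  (adj (delta_mx i 0 : 'cV[C]_n) *m A *m (delta_mx j 0 : 'cV[C]_n)) 0 0 = A i j.
Proof. by rewrite dg_delta -rowE -colE !mxE. Qed.

Lemma qf_lin n (A : 'M[C]_n) (u w : 'cV_n) c :
  (adj (u + c *: w) *m A *m (u + c *: w)) 0 0 =
  (adj u *m A *m u) 0 0 + c * (adj u *m A *m w) 0 0
  + c^* * (adj w *m A *m u) 0 0 + c^* * c * (adj w *m A *m w) 0 0.
Proof.
rewrite dgD dgZ !mulmxDl !mulmxDr -!scalemxAl -!scalemxAr !mxE.
by rewrite mulrA !addrA.
Qed.

Lemma qf0 n (B : 'M[C]_n) :
  (forall v : 'cV_n, (adj v *m B *m v) 0 0 = 0) -> B = 0.
Proof.
move=> H; apply/matrixP=> i j; rewrite mxE.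
have h0 := H (delta_mx i 0 + 0 *: delta_mx j 0).
have h1 := H (delta_mx i 0 + 1 *: delta_mx j 0).
have h2 := H (delta_mx i 0 + 'i *: delta_mx j 0).
have hj := H (delta_mx j 0 + 0 *: delta_mx i 0).
rewrite qf_lin !qf_e in h0; rewrite qf_lin !qf_e in h1;
rewrite qf_lin !qf_e in h2; rewrite qf_lin !qf_e in hj.
rewrite rmorph0 rmorph1 !(mul0r, mul1r, addr0) in h0 hj h1.
rewrite h0 hj !(add0r, addr0) in h1.
rewrite conjCi h0 hj !(mulr0, add0r, addr0) in h2.
have : 'i * (B i j - B j i) = 0 by rewrite -h2; ring.
move/eqP; rewrite mulf_eq0 (negPf (neq0Ci C)) /= subr_eq0 => /eqP e.
rewrite -e in h1; move/eqP: h1; rewrite -mulr2n -mulr_natr mulf_eq0.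
by rewrite pnatr_eq0 orbF => /eqP.
Qed.

Lemma qf_adj n (A : 'M[C]_n) (v : 'cV[C]_n) :
  (adj v *m adj A *m v) 0 0 = ((adj v *m A *m v) 0 0)^*.
Proof.
have -> : adj v *m adj A *m v = adj (adj v *m A *m v) by rewrite !dgM dgK mulmxA.
by rewrite dgE.
Qed.

Lemma psd_herm n (A : 'M[C]_n) : psd A -> adj A = A.
Proof.
move=> pA; apply/eqP; rewrite -subr_eq0; apply/eqP; apply: qf0 => v.
rewrite mulmxBr mulmxBl.
rewrite (_ : forall M N : 'M[C]_1, (M - N) 0 0 = M 0 0 - N 0 0); last by move=> M N; rewrite !mxE.
rewrite qf_adj.
by rewrite (conj_Creal (ger0_real (pA v))) subrr.
Qed.

Lemma dot_ge0 m (v : 'cV[C]_m) : 0 <= (adj v *m v) 0 0.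
Proof.
rewrite mxE; apply: sumr_ge0 => i _; rewrite dgE mulrC; exact: mul_conjC_ge0.
Qed.

Lemma dot_eq0 m (v : 'cV[C]_m) : (adj v *m v) 0 0 = 0 -> v = 0.
Proof.
rewrite mxE => h; apply/matrixP=> i j; rewrite [j]ord1 mxE.
have h0 : forall k, predT k -> 0 <= adj v 0 k * v k 0.
  by move=> k _; rewrite dgE mulrC mul_conjC_ge0.
have := psumr_eq0P h0 h (i := i) isT.
by rewrite dgE mulrC => /eqP; rewrite mul_conjC_eq0 => /eqP.
Qed.

Lemma adjZZ0 m n (Z : 'M[C]_(m, n)) : adj Z *m Z = 0 -> Z = 0.
Proof.
move=> h; apply/matrixP => i j; rewrite mxE.
have : (adj (Z *m (delta_mx j 0 : 'cV[C]_n)) *m (Z *m (delta_mx j 0 : 'cV[C]_n))) 0 0 = 0.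
  by rewrite dgM mulmxA -(mulmxA _ (adj Z)) h mulmx0 mul0mx mxE.
move/dot_eq0/matrixP/(_ i 0); rewrite -colE !mxE //.
Qed.

Lemma psd_conj n k (B : 'M[C]_(k, n)) X : psd X -> psd (B *m X *m adj B).
Proof.
move=> pX v; have := pX (adj B *m v).
by rewrite dgM dgK !mulmxA.
Qed.

Lemma psd1 n : psd (1%:M : 'M[C]_n).
Proof. by move=> v; rewrite mulmx1 dot_ge0. Qed.

Lemma psd_NN n k (N : 'M[C]_(n, k)) : psd (N *m adj N).
Proof. by have := psd_conj N (@psd1 k); rewrite mulmx1. Qed.

Lemma psdD n (A B : 'M[C]_n) : psd A -> psd B -> psd (A + B).
Proof. by move=> pA pB v; rewrite mulmxDr mulmxDl mxE addr_ge0. Qed.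

Lemma psd0 n : psd (0 : 'M[C]_n).
Proof. by move=> v; rewrite mulmx0 mul0mx mxE. Qed.

Lemma psd_sum (I : finType) n (F : I -> 'M[C]_n) :
  (forall i, psd (F i)) -> psd (\sum_i F i).
Proof.
move=> h; apply: (big_ind (@psd C n)) => //; [exact: psd0|exact: psdD].
Qed.

Lemma psdZ n c (A : 'M[C]_n) : 0 <= c -> psd A -> psd (c *: A).
Proof.
by move=> c0 pA v; rewrite -scalemxAr -scalemxAl mxE mulr_ge0.
Qed.

Lemma psd_tr n (A : 'M[C]_n) : psd A -> 0 <= \tr A.
Proof.
move=> pA; rewrite /mxtrace; apply: sumr_ge0 => i _.
by rewrite -qf_e; apply: pA.
Qed.

Lemma tr_conj_ge0 n k (B : 'M[C]_(k, n)) X : psd X -> 0 <= \tr (B *m X *m adj B).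
Proof. by move=> pX; apply/psd_tr/psd_conj. Qed.

Lemma psd_diag n (d : 'rV[C]_n) : (forall i, 0 <= d 0 i) -> psd (diag_mx d).
Proof.
move=> h v; rewrite mxE; apply: sumr_ge0 => i _.
rewrite mxE (bigD1 i) //= big1 ?addr0; last first.
  by move=> j /negPf ji; rewrite !mxE ji mulr0n mulr0.
rewrite !mxE eqxx mulr1n mulrAC mulr_ge0 //.
by rewrite mulrC mul_conjC_ge0.
Qed.

Lemma psd_sqrt n (A : 'M[C]_n) : psd A -> exists B, psd B /\ B *m B = A.
Proof.
move=> pA.
have nA : A \is normalmx.
  apply/normalmxP; have := psd_herm pA; rewrite /adj => ->; done.
have eA := orthomx_spectralP nA.
set U := spectralmx A in eA; set d := spectral_diag A in eA.
have uU : U \is unitarymx by apply: spectral_unitarymx.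
rewrite invmx_unitary // in eA.
have UU : U *m (U ^t*)%sesqui = 1%:M by apply/unitarymxP.
have d0 : forall i, 0 <= d 0 i.
  move=> i; have := pA ((U ^t*)%sesqui *m delta_mx i 0).
  rewrite eA dgM /adj trmxCK !mulmxA !mulmxtVK //.
  by have := qf_e (diag_mx d) i i; rewrite /adj => ->; rewrite mxE eqxx mulr1n.
exists ((U ^t*)%sesqui *m diag_mx (\row_i sqrtC (d 0 i)) *m U); split.
  have := psd_conj ((U ^t*)%sesqui) (psd_diag (d := \row_i sqrtC (d 0 i)) _).
  rewrite /adj trmxCK; apply => i; rewrite mxE sqrtC_ge0; exact: d0.
rewrite eA !mulmxA mulmxtVK // -(mulmxA (U ^t*)%sesqui) mulmx_diag.
congr (_ *m _ *m _); congr diag_mx; apply/matrixP=> i j.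
by rewrite [i]ord1 !mxE -expr2 sqrtCK.
Qed.

End Psd.

Section Kraus.
Variable C : numClosedFieldType.

Definition kraus {I : finType} {n q} (A : I -> 'M[C]_(q, n)) (X : 'M[C]_n) : 'M[C]_q :=
  \sum_i A i *m X *m adj (A i).

Lemma sum_tens (R : nmodType) u w (F : 'I_(u * w) -> R) :
  \sum_p F p = \sum_i \sum_j F (mxtens_index (i, j)).
Proof.
rewrite pair_bigA /=.
rewrite (reindex (@mxtens_index u w)) /=; last first.
  by exists (@mxtens_unindex u w) => x _; [apply: mxtens_indexK | apply: mxtens_unindexK].
by apply: eq_bigr => -[i j].
Qed.

Section Lin.
Variables (n q : nat) (Phi : 'M[C]_n -> 'M[C]_q).
Hypothesis hPhi : is_linear_map Phi.
Lemma lin0 : Phi 0 = 0.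
Proof.
have := hPhi 1 0 0; rewrite !scale1r addr0 => h.
by apply: (@addrI _ (Phi 0)); rewrite addr0 -h.
Qed.
Lemma linD X Y : Phi (X + Y) = Phi X + Phi Y.
Proof. by have := hPhi 1 X Y; rewrite !scale1r. Qed.
Lemma linZ c X : Phi (c *: X) = c *: Phi X.
Proof. by have := hPhi c X 0; rewrite !addr0 lin0 addr0. Qed.
Lemma linN X : Phi (- X) = - Phi X.
Proof. by rewrite -scaleN1r linZ scaleN1r. Qed.
Lemma linB X Y : Phi (X - Y) = Phi X - Phi Y.
Proof. by rewrite linD linN. Qed.
Lemma lin_sum (I : finType) (F : I -> 'M[C]_n) :
  Phi (\sum_i F i) = \sum_i Phi (F i).
Proof. by apply: (big_morph Phi linD lin0). Qed.
Lemma lin_expand X :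
  Phi X = \sum_i \sum_j X i j *: Phi (delta_mx i j).
Proof.
rewrite {1}(matrix_sum_delta X) lin_sum; apply: eq_bigr => i _.
by rewrite lin_sum; apply: eq_bigr => j _; rewrite linZ.
Qed.
End Lin.

Lemma lin_ext n q (Phi Psi : 'M[C]_n -> 'M[C]_q) :
  is_linear_map Phi -> is_linear_map Psi ->
  (forall i j, Phi (delta_mx i j) = Psi (delta_mx i j)) -> forall X, Phi X = Psi X.
Proof.
move=> lP lQ h X; rewrite (lin_expand lP) (lin_expand lQ).
by apply: eq_bigr => i _; apply: eq_bigr => j _; rewrite h.
Qed.

Lemma kraus_lin (I : finType) n q (A : I -> 'M[C]_(q, n)) : is_linear_map (kraus A).
Proof.
move=> c X Y; rewrite /kraus scaler_sumr -big_split /=; apply: eq_bigr => i _.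
by rewrite mulmxDr mulmxDl -scalemxAr -scalemxAl.
Qed.

Lemma mul_tens1l k n q r (B : 'M[C]_(q, n)) (Y : 'M[C]_(k * n, r)) i s j :
  ((1%:M *t B) *m Y) (mxtens_index (i, s)) j =
  \sum_c B s c * Y (mxtens_index (i, c)) j.
Proof.
rewrite mxE sum_tens (bigD1 i) //= [X in _ + X]big1 => [|i2 /negPf ne]; last first.
  by rewrite big1 // => c _; rewrite tensmxE !mxE eq_sym ne mul0r mul0r.
by rewrite addr0; apply: eq_bigr => c _; rewrite tensmxE !mxE eqxx mul1r.
Qed.

Lemma mul_tens1r k n q r (B : 'M[C]_(q, n)) (Y : 'M[C]_(r, k * n)) i t j :
  (Y *m adj (1%:M *t B)) j (mxtens_index (i, t)) =
  \sum_d Y j (mxtens_index (i, d)) * (B t d)^*.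
Proof.
rewrite mxE sum_tens (bigD1 i) //= [X in _ + X]big1 => [|i2 /negPf ne]; last first.
  by rewrite big1 // => c _; rewrite dgE tensmxE !mxE eq_sym ne mul0r rmorph0 mulr0.
rewrite addr0; apply: eq_bigr => c _.
by rewrite dgE tensmxE !mxE eqxx mul1r.
Qed.

Lemma tens1_conj k n q (B : 'M[C]_(q, n)) (X : 'M[C]_(k * n)) i1 s j1 t :
  ((1%:M *t B) *m X *m adj (1%:M *t B)) (mxtens_index (i1, s)) (mxtens_index (j1, t))
  = (B *m (\matrix_(c, d) X (mxtens_index (i1, c)) (mxtens_index (j1, d))) *m adj B) s t.
Proof.
rewrite mul_tens1r mxE; apply: eq_bigr => d _.
rewrite mul_tens1l dgE mxE; congr (_ * _); apply: eq_bigr => c _.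
by rewrite mxE.
Qed.

Lemma ampl_kraus (I : finType) n q k (A : I -> 'M[C]_(q, n)) (X : 'M[C]_(k * n)) :
  ampl (kraus A) X = \sum_i (1%:M *t A i) *m X *m adj (1%:M *t A i).
Proof.
apply/matrixP => p p'.
case: (mxtens_indexP p) => i1 s; case: (mxtens_indexP p') => j1 t.
rewrite mxE !mxtens_indexK /= !summxE; apply: eq_bigr => r _.
by rewrite tens1_conj.
Qed.

Lemma kraus_cp (I : finType) n q (A : I -> 'M[C]_(q, n)) :
  completely_positive (kraus A).
Proof.
move=> k X pX; rewrite ampl_kraus; apply: psd_sum => i; exact: psd_conj.
Qed.


Lemma delta_conj m n q (M : 'M[C]_(m, n)) (N : 'M[C]_(q, n)) i j s t :
  (M *m delta_mx i j *m adj N) s t = M s i * (N t j)^*.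
Proof.
rewrite -(mul_delta_mx (0 : 'I_1)) mulmxA -colE -mulmxA -rowE !mxE big_ord1.
by rewrite /col /row !mxE.
Qed.

Lemma choi n q (Phi : 'M[C]_n -> 'M[C]_q) :
  is_linear_map Phi -> completely_positive Phi ->
  exists A : 'I_(n * q) -> 'M[C]_(q, n), forall X, Phi X = kraus A X.
Proof.
move=> lP cP.
pose w : 'cV[C]_(n * n) :=
  \col_p ((mxtens_unindex p).1 == (mxtens_unindex p).2)%:R.
have := cP n (w *m adj w) (psd_NN w).
set Ch := ampl Phi _ => pCh.
have [B [pB BB]] := psd_sqrt pCh.
exists (fun r => \matrix_(s, j) B (mxtens_index (j, s)) r).
apply: lin_ext => //; first exact: kraus_lin.
move=> i j; apply/matrixP => s t.
have -> : Phi (delta_mx i j) s t = Ch (mxtens_index (i, s)) (mxtens_index (j, t)).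
  rewrite /Ch mxE !mxtens_indexK /=; congr (Phi _ s t).
  apply/matrixP => c d; rewrite !mxE big_ord1 !mxE !mxtens_indexK /=.
  rewrite rmorph_nat -natrM; congr (_%:R).
  by rewrite [c == i]eq_sym [d == j]eq_sym; do 2 case: eqP.
rewrite -BB -{2}(psd_herm pB) /kraus summxE mxE; apply: eq_bigr => r _.
by rewrite delta_conj !mxE.
Qed.

End Kraus.

Section Inst.
Variable C : numClosedFieldType.

Lemma mxtrace_sum (I : finType) n (F : I -> 'M[C]_n) :
  \tr (\sum_i F i) = \sum_i \tr (F i).
Proof. exact: (big_morph _ (@mxtraceD _ _) (@mxtrace0 _ _)). Qed.

Lemma tr_delta n (M : 'M[C]_n) i j : \tr (M *m delta_mx j i) = M i j.
Proof.
rewrite mxtrace_mulC -(mul_delta_mx (0 : 'I_1)) -mulmxA -rowE mxtrace_mulC.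
by rewrite -colE /mxtrace big_ord1 /col /row !mxE.
Qed.

Lemma tr11 n (v : 'cV[C]_n) (u : 'rV[C]_n) : \tr (v *m u) = (u *m v) 0 0.
Proof. by rewrite mxtrace_mulC /mxtrace big_ord1. Qed.

Lemma kraus_tr (I : finType) n q (A : I -> 'M[C]_(q, n)) X :
  \tr (kraus A X) = \tr ((\sum_i adj (A i) *m A i) *m X).
Proof.
rewrite /kraus mxtrace_sum mulmx_suml mxtrace_sum; apply: eq_bigr => i _.
by rewrite mxtrace_mulC mulmxA.
Qed.

Lemma ampl_ext n q k (Phi Psi : 'M[C]_n -> 'M[C]_q) (X : 'M[C]_(k * n)) :
  (forall Y, Phi Y = Psi Y) -> ampl Phi X = ampl Psi X.
Proof. by move=> h; apply/matrixP => i j; rewrite !mxE h. Qed.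

Lemma kraus_instr (Om K : finType) n q (Phi : Om -> 'M[C]_n -> 'M[C]_q)
  (A : Om -> K -> 'M[C]_(q, n)) :
  (forall x X, Phi x X = kraus (A x) X) ->
  \sum_x \sum_k adj (A x k) *m A x k = 1%:M -> instrument Phi.
Proof.
move=> hP h1.
have trs : forall X, \tr (\sum_x Phi x X) = \tr X.
  move=> X; rewrite mxtrace_sum; under eq_bigr do rewrite hP kraus_tr.
  by rewrite -mxtrace_sum -mulmx_suml h1 mul1mx.
split => //; move=> x; split; [|split].
- by move=> c X Y; rewrite !hP kraus_lin.
- by move=> k X pX; rewrite (ampl_ext _ (hP x)); apply: kraus_cp.
- move=> rho prho; rewrite -(trs rho) mxtrace_sum (bigD1 x) //= lerDl.
  apply: sumr_ge0 => y _; rewrite hP /kraus mxtrace_sum.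
  by apply: sumr_ge0 => k _; apply: tr_conj_ge0.
Qed.

Lemma kraus_trpres (Om K : finType) n q (A : Om -> K -> 'M[C]_(q, n)) :
  (forall X, \tr (\sum_x kraus (A x) X) = \tr X) ->
  \sum_x \sum_k adj (A x k) *m A x k = 1%:M.
Proof.
move=> h; apply/matrixP => i j.
have := h (delta_mx j i); rewrite mxtrace_sum.
under eq_bigr do rewrite kraus_tr.
rewrite -mxtrace_sum -mulmx_suml tr_delta => ->.
by rewrite -[delta_mx j i]mul1mx tr_delta.
Qed.

Lemma outer_lin n (u w : 'cV[C]_n) c :
  (u + c *: w) *m adj (u + c *: w) =
  u *m adj u + c^* *: (u *m adj w) + c *: (w *m adj u) + (c * c^*) *: (w *m adj w).
Proof.
apply/matrixP => a b; rewrite !mxE !big_ord1 !mxE.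
by rewrite rmorphD rmorphM; ring.
Qed.

Lemma state_ext n q (Phi Psi : 'M[C]_n -> 'M[C]_q) : (0 < n)%N ->
  is_linear_map Phi -> is_linear_map Psi ->
  (forall rho, state rho -> Phi rho = Psi rho) -> forall X, Phi X = Psi X.
Proof.
move=> n0 lP lQ h.
pose D X := Phi X - Psi X.
have lD : is_linear_map D.
  by move=> c X Y; rewrite /D lP lQ scalerBr opprD addrACA.
suff hD : forall X, D X = 0 by move=> X; apply/eqP; rewrite -subr_eq0 -/(D X) hD.
have hv : forall v : 'cV_n, D (v *m adj v) = 0.
  move=> v; have [t0|tn0] := eqVneq ((adj v *m v) 0 0) 0.
    by rewrite (dot_eq0 t0) mul0mx lin0.
  set t := (adj v *m v) 0 0 in tn0.
  have ht : v *m adj v = t *: (t^-1 *: (v *m adj v)) by rewrite scalerA divff // scale1r.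
  rewrite ht (linZ lD) /D h ?subrr ?scaler0 //; split.
    apply: psdZ; last exact: psd_NN.
    by rewrite invr_ge0 dot_ge0.
  by rewrite mxtraceZ tr11 mulVf.
have l0 : is_linear_map (fun _ : 'M[C]_n => (0 : 'M[C]_q)).
  by move=> *; rewrite scaler0 addr0.
move=> X; apply: (lin_ext lD l0) => i j /=.
pose u : 'cV[C]_n := delta_mx i 0; pose w : 'cV[C]_n := delta_mx j 0.
have e : u *m adj w = delta_mx i j by rewrite dg_delta mul_delta_mx.
have key : forall c, c^* *: D (u *m adj w) + c *: D (w *m adj u) = 0.
  move=> c; have := hv (u + c *: w); rewrite outer_lin !(linD lD) !(linZ lD) !hv.
  by rewrite scaler0 addr0 add0r.
have k1 := key 1; have k2 := key 'i.
rewrite rmorph1 !scale1r in k1.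
rewrite conjCi in k2.
have : 'i *: (D (w *m adj u) - D (u *m adj w)) = 0.
  by rewrite scalerBr addrC -k2 scaleNr.
move/eqP; rewrite scaler_eq0 (negPf (neq0Ci C)) /= subr_eq0 => /eqP ee.
rewrite ee in k1; move/eqP: k1; rewrite -mulr2n -scaler_nat scaler_eq0 pnatr_eq0 /=.
by rewrite -e => /eqP.
Qed.

End Inst.

Section Ptr.
Variable C : numClosedFieldType.

Definition blk1 u w n (Z : 'M[C]_(u * w, n)) (i : 'I_u) : 'M[C]_(w, n) :=
  \matrix_(j, c) Z (mxtens_index (i, j)) c.
Definition blk2 u w n (Z : 'M[C]_(u * w, n)) (j : 'I_w) : 'M[C]_(u, n) :=
  \matrix_(i, c) Z (mxtens_index (i, j)) c.

Lemma conjE m n (Z : 'M[C]_(m, n)) (X : 'M[C]_n) p q :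
  (Z *m X *m adj Z) p q = \sum_d \sum_c Z p c * X c d * (Z q d)^*.
Proof.
rewrite mxE; apply: eq_bigr => d _; rewrite mxE mulr_suml; apply: eq_bigr => c _.
by rewrite !mxE.
Qed.

Lemma conjE2 m m' n (Z : 'M[C]_(m, n)) (Z' : 'M[C]_(m', n)) (X : 'M[C]_n) p q :
  (Z *m X *m adj Z') p q = \sum_d \sum_c Z p c * X c d * (Z' q d)^*.
Proof.
rewrite mxE; apply: eq_bigr => d _; rewrite mxE mulr_suml; apply: eq_bigr => c _.
by rewrite !mxE.
Qed.

Lemma ptr1_blk u w n (Z : 'M[C]_(u * w, n)) X :
  ptr1 (Z *m X *m adj Z) = \sum_i blk1 Z i *m X *m adj (blk1 Z i).
Proof.
apply/matrixP => j k; rewrite mxE summxE; apply: eq_bigr => i _.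
rewrite !conjE; apply: eq_bigr => d _; apply: eq_bigr => c _; by rewrite !mxE.
Qed.

Lemma ptr2_blk u w n (Z : 'M[C]_(u * w, n)) X :
  ptr2 (Z *m X *m adj Z) = \sum_j blk2 Z j *m X *m adj (blk2 Z j).
Proof.
apply/matrixP => j k; rewrite mxE summxE; apply: eq_bigr => i _.
rewrite !conjE; apply: eq_bigr => d _; apply: eq_bigr => c _; by rewrite !mxE.
Qed.

Lemma ptr1_tr u w n (Z : 'M[C]_(u * w, n)) X :
  ptr1 (Z *m X *m adj Z) =
  \matrix_(j, j') \tr (blk2 Z j *m X *m adj (blk2 Z j')).
Proof.
apply/matrixP => j k; rewrite !mxE; apply: eq_bigr => i _.
rewrite conjE conjE2; apply: eq_bigr => d _; apply: eq_bigr => c _; by rewrite !mxE.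
Qed.

Lemma ptr2_tr u w n (Z : 'M[C]_(u * w, n)) X :
  ptr2 (Z *m X *m adj Z) =
  \matrix_(i, i') \tr (blk1 Z i *m X *m adj (blk1 Z i')).
Proof.
apply/matrixP => j k; rewrite !mxE; apply: eq_bigr => i _.
rewrite conjE conjE2; apply: eq_bigr => d _; apply: eq_bigr => c _; by rewrite !mxE.
Qed.

Lemma blk2_gram u w n (Z : 'M[C]_(u * w, n)) :
  \sum_j adj (blk2 Z j) *m blk2 Z j = adj Z *m Z.
Proof.
apply/matrixP => c c'; rewrite summxE mxE sum_tens exchange_big.
apply: eq_bigr => j _; rewrite mxE; apply: eq_bigr => i _; by rewrite !mxE.
Qed.

Lemma ptr1D u w (A B : 'M[C]_(u * w)) : ptr1 (A + B) = ptr1 A + ptr1 B.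
Proof. by apply/matrixP => j k; rewrite !mxE -big_split; apply: eq_bigr => i _; rewrite mxE. Qed.
Lemma ptr2D u w (A B : 'M[C]_(u * w)) : ptr2 (A + B) = ptr2 A + ptr2 B.
Proof. by apply/matrixP => j k; rewrite !mxE -big_split; apply: eq_bigr => i _; rewrite mxE. Qed.
Lemma ptr1Z u w c (A : 'M[C]_(u * w)) : ptr1 (c *: A) = c *: ptr1 A.
Proof. by apply/matrixP => j k; rewrite !mxE mulr_sumr; apply: eq_bigr => i _; rewrite mxE. Qed.
Lemma ptr2Z u w c (A : 'M[C]_(u * w)) : ptr2 (c *: A) = c *: ptr2 A.
Proof. by apply/matrixP => j k; rewrite !mxE mulr_sumr; apply: eq_bigr => i _; rewrite mxE. Qed.
Lemma ptr10 u w : ptr1 (0 : 'M[C]_(u * w)) = 0.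
Proof. by apply/matrixP => j k; rewrite !mxE big1 // => i _; rewrite mxE. Qed.
Lemma ptr20 u w : ptr2 (0 : 'M[C]_(u * w)) = 0.
Proof. by apply/matrixP => j k; rewrite !mxE big1 // => i _; rewrite mxE. Qed.
Lemma ptr1_sum (I : finType) u w (F : I -> 'M[C]_(u * w)) :
  ptr1 (\sum_i F i) = \sum_i ptr1 (F i).
Proof. exact: (big_morph _ (@ptr1D _ _) (@ptr10 _ _)). Qed.
Lemma ptr2_sum (I : finType) u w (F : I -> 'M[C]_(u * w)) :
  ptr2 (\sum_i F i) = \sum_i ptr2 (F i).
Proof. exact: (big_morph _ (@ptr2D _ _) (@ptr20 _ _)). Qed.

Lemma lin_ptr1 n u w (Phi : 'M[C]_n -> 'M[C]_(u * w)) :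
  is_linear_map Phi -> is_linear_map (fun X => ptr1 (Phi X)).
Proof. by move=> h c X Y; rewrite h ptr1D ptr1Z. Qed.
Lemma lin_ptr2 n u w (Phi : 'M[C]_n -> 'M[C]_(u * w)) :
  is_linear_map Phi -> is_linear_map (fun X => ptr2 (Phi X)).
Proof. by move=> h c X Y; rewrite h ptr2D ptr2Z. Qed.

Lemma lin_sumf (I : finType) n q (Phi : I -> 'M[C]_n -> 'M[C]_q) :
  (forall i, is_linear_map (Phi i)) -> is_linear_map (fun X => \sum_i Phi i X).
Proof.
move=> h c X Y; rewrite scaler_sumr -big_split; apply: eq_bigr => i _; exact: h.
Qed.

Lemma mul_tensl1 u w r (A : 'M[C]_u) (Y : 'M[C]_(u * w, r)) i j q :
  ((A *t 1%:M) *m Y) (mxtens_index (i, j)) q =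
  \sum_i1 A i i1 * Y (mxtens_index (i1, j)) q.
Proof.
rewrite mxE sum_tens; apply: eq_bigr => i1 _.
rewrite (bigD1 j) //= [X in _ + X]big1 => [|j2 /negPf ne]; last first.
  by rewrite tensmxE !mxE eq_sym ne mulr0 mul0r.
by rewrite addr0 tensmxE !mxE eqxx mulr1.
Qed.

Lemma mul_tensr1 u w r (B : 'M[C]_u) (Y : 'M[C]_(r, u * w)) p i k :
  (Y *m (B *t 1%:M)) p (mxtens_index (i, k)) =
  \sum_i1 Y p (mxtens_index (i1, k)) * B i1 i.
Proof.
rewrite mxE sum_tens; apply: eq_bigr => i1 _.
rewrite (bigD1 k) //= [X in _ + X]big1 => [|j2 /negPf ne]; last first.
  by rewrite tensmxE !mxE ne mulr0 mulr0.
by rewrite addr0 tensmxE !mxE eqxx mulr1.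
Qed.

Lemma ptr1_tensl u w (A B : 'M[C]_u) (M : 'M[C]_(u * w)) :
  ptr1 ((A *t 1%:M) *m M *m (B *t 1%:M)) = ptr1 (M *m ((B *m A) *t 1%:M)).
Proof.
apply/matrixP => j k; rewrite !mxE.
under eq_bigr do rewrite mul_tensr1.
under [RHS]eq_bigr do rewrite mul_tensr1.
under eq_bigr do under eq_bigr do rewrite mul_tensl1 mulr_suml.
rewrite exchange_big; under eq_bigr do rewrite exchange_big; rewrite exchange_big.
apply: eq_bigr => i1 _; apply: eq_bigr => i2 _.
rewrite mxE mulr_sumr; apply: eq_bigr => i _; ring.
Qed.

Lemma tens_suml (I : finType) u w v z (F : I -> 'M[C]_(u, w)) (B : 'M[C]_(v, z)) :
  \sum_i (F i *t B) = (\sum_i F i) *t B.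
Proof.
apply/matrixP => p q; rewrite summxE !mxE summxE mulr_suml.
by apply: eq_bigr => i _; rewrite !mxE.
Qed.

Lemma tens11 u w : (1%:M : 'M[C]_u) *t (1%:M : 'M[C]_w) = 1%:M.
Proof.
apply/matrixP => p q.
case: (mxtens_indexP p) => i j; case: (mxtens_indexP q) => k l.
rewrite tensmxE !mxE (inj_eq (can_inj (@mxtens_indexK u w))) -natrM.
by rewrite xpair_eqE mulnb.
Qed.

End Ptr.

Section Douglas.
Variable C : numClosedFieldType.

Lemma psd_spectral n (P : 'M[C]_n) : psd P ->
  exists U : 'M[C]_n, exists d : 'rV[C]_n,
    [/\ U *m adj U = 1%:M, adj U *m U = 1%:M, P = adj U *m diag_mx d *m U &
        forall i, 0 <= d 0 i].
Proof.
move=> pA.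
have nA : P \is normalmx.
  apply/normalmxP; have := psd_herm pA; rewrite /adj => ->; done.
have eA := orthomx_spectralP nA.
set U := spectralmx P in eA; set d := spectral_diag P in eA.
have uU : U \is unitarymx by apply: spectral_unitarymx.
rewrite invmx_unitary // in eA.
have UU : U *m (U ^t*)%sesqui = 1%:M by apply/unitarymxP.
have UU' : (U ^t*)%sesqui *m U = 1%:M.
  by rewrite -invmx_unitary // mulVmx // spectral_unit.
exists U, d; split => //.
move=> i; have := pA ((U ^t*)%sesqui *m delta_mx i 0).
rewrite eA dgM /adj trmxCK !mulmxA !mulmxtVK //.
by have := qf_e (diag_mx d) i i; rewrite /adj => ->; rewrite mxE eqxx mulr1n.
Qed.

Lemma douglas a b m n (L : 'I_a -> 'M[C]_(m, n)) (M : 'I_b -> 'M[C]_(m, n)) :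
  (forall X, kraus L X = kraus M X) ->
  exists T : 'M[C]_(b, a),
    (forall k, M k = \sum_i T k i *: L i) /\
    exists N : 'M[C]_a, 1%:M - adj T *m T = N *m adj N.
Proof.
move=> hK.
pose Lm : 'M[C]_(a, m * n) := \matrix_(i, p) mxvec (L i) 0 p.
pose Mm : 'M[C]_(b, m * n) := \matrix_(i, p) mxvec (M i) 0 p.
have gram : adj Lm *m Lm = adj Mm *m Mm.
  apply/matrixP => p p'.
  case: (mxvec_indexP p) => k j; case: (mxvec_indexP p') => k' j'.
  have := congr1 (fun Y : 'M[C]_m => Y k' k) (hK (delta_mx j' j)).
  rewrite /kraus !summxE !mxE.
  under eq_bigr do rewrite delta_conj.
  under [in RHS]eq_bigr do rewrite delta_conj.
  move=> e; rewrite -[LHS]/(\sum_i _) -[RHS]/(\sum_i _).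
  transitivity (\sum_i L i k' j' * (L i k j)^*).
    by apply: eq_bigr => i _; rewrite !mxE !mxvecE mulrC.
  rewrite e; apply: eq_bigr => i _; by rewrite !mxE !mxvecE mulrC.
have [U [d [UU UU' eP d0]]] := psd_spectral (psd_NN Lm).
pose La := U *m Lm.
have LL : La *m adj La = diag_mx d.
  by rewrite dgM !mulmxA -(mulmxA U) eP !mulmxA UU mul1mx -mulmxA UU mulmx1.
have Lmat : Lm = adj U *m La by rewrite mulmxA UU' mul1mx.
clearbody La.
pose Dp := diag_mx (\row_i (d 0 i)^-1).
pose T := Mm *m adj La *m Dp *m U.
pose Q := adj La *m Dp *m La.
have rowz : forall i, d 0 i = 0 -> row i La = 0.
  move=> i di; have : adj (adj (row i La)) *m adj (row i La) = 0.
    apply/matrixP => x y; rewrite [x]ord1 [y]ord1 dgK.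
    transitivity ((La *m adj La) i i); last by rewrite LL !mxE eqxx mulr1n di.
    by rewrite !mxE; apply: eq_bigr => p _; rewrite !mxE.
  move/adjZZ0 => h; by rewrite -[row i La]dgK h dg0.
have LaQ : La *m Q = La.
  rewrite /Q !mulmxA LL mulmx_diag; apply/matrixP => i p; rewrite !mxE.
  rewrite (bigD1 i) //= big1 ?addr0 => [|j /negPf ne]; last by rewrite !mxE eq_sym ne mulr0n mul0r.
  rewrite !mxE eqxx mulr1n; have [di|di] := eqVneq (d 0 i) 0.
    by have := congr1 (fun Y : 'rV[C]_(m * n) => Y 0 p) (rowz i di); rewrite !mxE => ->; rewrite mulr0.
  by rewrite mulfV // mul1r.
have LQ : Lm *m Q = Lm by rewrite Lmat -mulmxA LaQ.
have MQ : Mm *m Q = Mm.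
  have E1 : Lm *m (1%:M - Q) = 0 by rewrite mulmxBr mulmx1 LQ subrr.
  have : adj (Mm *m (1%:M - Q)) *m (Mm *m (1%:M - Q)) = 0.
    rewrite dgM -mulmxA (mulmxA (adj Mm)) -gram -(mulmxA (adj Lm)) E1.
    by rewrite !mulmx0.
  by move/adjZZ0/eqP; rewrite mulmxBr mulmx1 subr_eq0 => /eqP <-.
have TL : T *m Lm = Mm.
  by rewrite /T Lmat -!mulmxA (mulmxA U) UU mul1mx (mulmxA (adj La)) -/Q MQ.
exists T; split.
  move=> k; apply/matrixP => x y.
  have := congr1 (fun Y : 'M[C]_(b, m * n) => Y k (mxvec_index x y)) TL.
  rewrite !mxE mxvecE summxE => <-; apply: eq_bigr => i _.
  by rewrite !mxE mxvecE.
pose J := diag_mx (\row_i ((d 0 i == 0)%:R : C)).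
exists (adj U *m J).
have dr : forall i, (d 0 i)^* = d 0 i by move=> i; apply/conj_Creal/ger0_real.
have Dph : adj Dp = Dp.
  rewrite /Dp dg_diag; congr diag_mx; apply/matrixP => x i; rewrite !mxE.
  by rewrite conj_Creal // rpredV ger0_real.
have TT : adj T *m T = adj U *m (1%:M - J) *m U.
  rewrite /T !dgM Dph dgK !mulmxA -(mulmxA _ (adj Mm) Mm) -gram Lmat dgM dgK.
  rewrite !mulmxA -(mulmxA _ U (adj U)) UU mulmx1 -!(mulmxA _ La (adj La)) !LL.
  rewrite -!mulmxA; congr (_ *m _); rewrite !mulmxA; congr (_ *m _).
  rewrite !mulmx_diag; apply/matrixP => x y.
  rewrite !mxE; case: eqP => [->|_]; last by rewrite !mulr0n subr0.
  rewrite !mulr1n; have [->|di] := eqVneq (d 0 y) 0.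
    by rewrite invr0 !mul0r subrr.
  by rewrite subr0 mulVf // mul1r mulfV.
rewrite TT mulmxBr mulmx1 mulmxBl UU' -mulmxA opprB addrC subrK.
rewrite dgM dgK -!mulmxA; congr (_ *m _); rewrite mulmxA; congr (_ *m _).
rewrite dg_diag mulmx_diag; congr diag_mx; apply/matrixP => x i; rewrite !mxE.
by case: eqP; rewrite ?rmorph1 ?rmorph0 ?mulr1 ?mulr0.
Qed.

End Douglas.

Section Aux.
Variable C : numClosedFieldType.

Lemma sum_enumv (R : nmodType) (K : finType) (F : K -> R) :
  \sum_k F k = \sum_(j < #|K|) F (enum_val j).
Proof.
have bij : bijective (fun j : 'I_#|K| => (enum_val j : K)).
  exists enum_rank => x; [exact: (@enum_valK K x) | exact: (@enum_rankK K x)].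
by rewrite (reindex _ (onW_bij _ bij)).
Qed.

Lemma sqrtm_spec n (A : 'M[C]_n) : psd A -> psd (sqrtm A) /\ sqrtm A *m sqrtm A = A.
Proof.
move=> pA; exact: (epsilon_spec (inhabits 0) (fun B : 'M[C]_n => psd B /\ B *m B = A) (psd_sqrt pA)).
Qed.

Lemma blk1_gram u w n (Z : 'M[C]_(u * w, n)) :
  \sum_i adj (blk1 Z i) *m blk1 Z i = adj Z *m Z.
Proof.
apply/matrixP => c c'; rewrite summxE mxE sum_tens.
apply: eq_bigr => i _; rewrite mxE; apply: eq_bigr => j _; by rewrite !mxE.
Qed.

Lemma trZl n m (X : 'M[C]_n) (A B : 'M[C]_(m, n)) c :
  \tr ((c *: A) *m X *m adj B) = c * \tr (A *m X *m adj B).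
Proof. by rewrite -!scalemxAl mxtraceZ. Qed.

Lemma trZr n m (X : 'M[C]_n) (A B : 'M[C]_(m, n)) c :
  \tr (A *m X *m adj (c *: B)) = c^* * \tr (A *m X *m adj B).
Proof. by rewrite dgZ -scalemxAr mxtraceZ. Qed.

Lemma tr_suml (I : finType) n m (X : 'M[C]_n) (F : I -> 'M[C]_(m, n)) B :
  \tr ((\sum_i F i) *m X *m adj B) = \sum_i \tr (F i *m X *m adj B).
Proof. by rewrite !mulmx_suml mxtrace_sum. Qed.

Lemma tr_sumr (I : finType) n m (X : 'M[C]_n) (F : I -> 'M[C]_(m, n)) A :
  \tr (A *m X *m adj (\sum_i F i)) = \sum_i \tr (A *m X *m adj (F i)).
Proof. by rewrite dg_sum !mulmx_sumr mxtrace_sum. Qed.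

Lemma conj_gram a p m n (T : 'M[C]_(p, a)) (Ls : 'I_a -> 'M[C]_(m, n)) X :
  T *m (\matrix_(i, j) \tr (Ls i *m X *m adj (Ls j))) *m adj T =
  \matrix_(v, v') \tr ((\sum_i T v i *: Ls i) *m X *m adj (\sum_i T v' i *: Ls i)).
Proof.
apply/matrixP => v v'; rewrite conjE2 mxE tr_suml exchange_big.
apply: eq_bigr => i _; rewrite tr_sumr; apply: eq_bigr => j _.
by rewrite trZl (trZr X (Ls i) (Ls j)) !mxE; ring.
Qed.

Lemma gram_sum a b m n (S : 'M[C]_(b, a)) (Ls : 'I_a -> 'M[C]_(m, n)) X :
  \sum_k \tr ((\sum_i S k i *: Ls i) *m X *m adj (\sum_i S k i *: Ls i)) =
  \sum_i \sum_j (adj S *m S) j i * \tr (Ls i *m X *m adj (Ls j)).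
Proof.
under eq_bigr do rewrite tr_suml.
rewrite exchange_big; apply: eq_bigr => i _.
under eq_bigr do rewrite tr_sumr.
rewrite exchange_big; apply: eq_bigr => j _.
rewrite mxE mulr_suml; apply: eq_bigr => k _.
by rewrite trZl (trZr X (Ls i) (Ls j)) !mxE; ring.
Qed.

End Aux.

Lemma sum_triple (C : numClosedFieldType) (A B D : finType) (f : A * B * D -> C) :
  \sum_b f b = \sum_y \sum_r \sum_v f (y, r, v).
Proof.
rewrite (eq_bigr (fun b => f (b.1.1, b.1.2, b.2))) => [|[[? ?] ?] _] //.
rewrite -(pair_bigA _ (fun yr v => f (yr.1, yr.2, v))) /=.
by rewrite -(pair_bigA _ (fun y r => \sum_v f (y, r, v))).
Qed.

Section Main.
Variable C : numClosedFieldType.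
Variables (Omega Lambda : finType) (n m p a : nat).
Hypothesis n_gt0 : (0 < n)%N.
Variables (I : Omega -> 'M[C]_n -> 'M[C]_m) (J : Lambda -> 'M[C]_n -> 'M[C]_p).
Variables (W : 'M[C]_(a * m, n)) (E : Omega -> 'M[C]_a).
Hypotheses (hI : instrument I) (hJ : instrument J) (hD : dilation I W E).

Definition Sx x := sqrtm (E x).
Definition Yx x : 'M[C]_(a * m, n) := (Sx x *t (1%:M : 'M[C]_m)) *m W.

Lemma hS x : psd (Sx x) /\ Sx x *m Sx x = E x.
Proof. apply: sqrtm_spec; have [_ [[pE _] _]] := hD; exact: pE. Qed.

Lemma Sh x : adj (Sx x) = Sx x.
Proof. exact: psd_herm (hS x).1. Qed.

Lemma adjSt x : adj (Sx x *t (1%:M : 'M[C]_m)) = Sx x *t 1%:M.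
Proof. by rewrite dg_tens Sh dg1. Qed.

Lemma compY x X : complementary W E x X = ptr2 (Yx x *m X *m adj (Yx x)).
Proof. by rewrite /complementary /Yx dgM adjSt -/(Sx x) !mulmxA. Qed.

Lemma IY x rho : state rho -> I x rho = ptr1 (Yx x *m rho *m adj (Yx x)).
Proof.
move=> st; have [_ [_ dI]] := hD; rewrite dI // /Yx dgM adjSt.
have -> : Sx x *t 1%:M *m W *m rho *m (adj W *m (Sx x *t 1%:M)) =
  (Sx x *t 1%:M) *m (W *m rho *m adj W) *m (Sx x *t 1%:M) by rewrite !mulmxA.
by rewrite ptr1_tensl (hS x).2.
Qed.

Lemma IK x X : I x X = kraus (blk1 (Yx x)) X.
Proof.
apply: (state_ext n_gt0) => //; first exact: (hI.1 x).1.
  exact: kraus_lin.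
by move=> rho st; rewrite IY // ptr1_blk.
Qed.

Lemma sumYY : \sum_x adj (Yx x) *m Yx x = 1%:M.
Proof.
have [isoW [[_ sE] _]] := hD.
under eq_bigr do rewrite /Yx dgM adjSt mulmxA -(mulmxA _ _ (Sx _ *t _)) tensmx_mul
   (hS _).2 mulmx1.
by rewrite -mulmx_suml -mulmx_sumr tens_suml sE tens11 mulmx1.
Qed.


Lemma dir1 : postprocessing J (complementary W E) -> compatible I J.
Proof.
case=> R [hR hJR].
have hQ : forall x y, exists Q : 'I_(a * p) -> 'M[C]_(p, a), forall X, R x y X = kraus Q X.
  move=> x y; have [l [c _]] := (hR x).1 y; exact: choi.
pose Q x y := epsilon (inhabits (fun _ => 0)) (fun Q : 'I_(a * p) -> 'M[C]_(p, a) =>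
   forall X, R x y X = kraus Q X).
have hQ' : forall x y X, R x y X = kraus (Q x y) X.
  by move=> x y; apply: (epsilon_spec _ _ (hQ x y)).
have QQ : forall x, \sum_y \sum_r adj (Q x y r) *m Q x y r = 1%:M.
  move=> x; apply: kraus_trpres => X; rewrite -(hR x).2.
  by congr (\tr _); apply: eq_bigr => y _; rewrite hQ'.
pose Z x y r : 'M[C]_(m * p, n) := \matrix_(i, c)
   (Q x y r *m blk2 (Yx x) (mxtens_unindex i).1) (mxtens_unindex i).2 c.
have Z1 : forall x y r k, blk1 (Z x y r) k = Q x y r *m blk2 (Yx x) k.
  by move=> x y r k; apply/matrixP => v c; rewrite /blk1 /Z !mxE mxtens_indexK.
exists (fun xy X => kraus (Z xy.1 xy.2) X); split; [|split].
- apply: (kraus_instr (A := fun xy => Z xy.1 xy.2)) => //.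
  rewrite -(pair_bigA _ (fun x y => \sum_r adj (Z x y r) *m Z x y r)) /=.
  rewrite -sumYY; apply: eq_bigr => x _.
  rewrite -blk2_gram.
  under eq_bigr do under eq_bigr do rewrite -blk1_gram.
  transitivity (\sum_k adj (blk2 (Yx x) k) *m
     (\sum_y \sum_r adj (Q x y r) *m Q x y r) *m blk2 (Yx x) k); last first.
    by rewrite QQ; apply: eq_bigr => k _; rewrite mulmx1.
  have e : forall k, adj (blk2 (Yx x) k) *m
     (\sum_y \sum_r adj (Q x y r) *m Q x y r) *m blk2 (Yx x) k =
     \sum_y \sum_r adj (blk2 (Yx x) k) *m (adj (Q x y r) *m Q x y r) *m blk2 (Yx x) k.
    move=> k; rewrite mulmx_sumr mulmx_suml; apply: eq_bigr => y _.
    by rewrite mulmx_sumr mulmx_suml.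
  under [RHS]eq_bigr do rewrite e.
  rewrite [RHS]exchange_big; apply: eq_bigr => y _.
  rewrite [RHS]exchange_big; apply: eq_bigr => r _; apply: eq_bigr => k _.
  by rewrite Z1 dgM !mulmxA.
- move=> y rho st; rewrite hJR; apply: eq_bigr => x _.
  rewrite /kraus ptr1_sum hQ' compY ptr2_blk /kraus.
  apply: eq_bigr => r _; rewrite ptr1_blk mulmx_sumr mulmx_suml.
  by apply: eq_bigr => k _; rewrite Z1 dgM !mulmxA.
- move=> x rho st; rewrite IY // ptr1_tr.
  apply/matrixP => k k'; rewrite summxE mxE.
  transitivity (\sum_y \sum_r \tr (adj (Q x y r) *m Q x y r *m
     (blk2 (Yx x) k *m rho *m adj (blk2 (Yx x) k')))).
    apply: eq_bigr => y _; rewrite /kraus ptr2_sum summxE; apply: eq_bigr => r _.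
    rewrite ptr2_tr mxE !Z1 dgM mxtrace_mulC !mulmxA.
    by rewrite -!mulmxA mxtrace_mulC !mulmxA.
  under eq_bigr do rewrite -mxtrace_sum -mulmx_suml.
  by rewrite -mxtrace_sum -mulmx_suml QQ mul1mx.
Qed.


Lemma lin_I x : is_linear_map (I x).
Proof. exact: (hI.1 x).1. Qed.

Lemma ex_y0 : exists y0 : Lambda, True.
Proof.
case: (pickP (@predT Lambda)) => [y0 _|h]; first by exists y0.
have := hJ.2 1%:M; rewrite big_pred0 // mxtrace0 mxtrace1 => /esym/eqP.
rewrite pnatr_eq0 => /eqP n0; by have := n_gt0; rewrite n0.
Qed.

Lemma p_gt0 : (0 < p)%N.
Proof.
rewrite lt0n; apply/eqP => p0.
have tr0 : forall M : 'M[C]_p, \tr M = 0.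
  by move=> M; rewrite /mxtrace big1 // => -[i hi]; exfalso; move: hi; rewrite p0.
have := hJ.2 1%:M; rewrite tr0 mxtrace1 => /esym/eqP.
rewrite pnatr_eq0 => /eqP n0; by have := n_gt0; rewrite n0.
Qed.


Local Notation Kt := (Lambda * 'I_(n * (m * p)) * 'I_p)%type.

Lemma dir2 : compatible I J -> postprocessing J (complementary W E).
Proof.
case=> G [hG [hGJ hGI]].
have hK : forall xy, exists K : 'I_(n * (m * p)) -> 'M[C]_(m * p, n),
    forall X, G xy X = kraus K X.
  move=> xy; have [l [c _]] := hG.1 xy; exact: choi.
pose K xy := epsilon (inhabits (fun _ => 0))
  (fun K : 'I_(n * (m * p)) -> 'M[C]_(m * p, n) => forall X, G xy X = kraus K X).
have hK' : forall xy X, G xy X = kraus (K xy) X.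
  by move=> xy; apply: (epsilon_spec _ _ (hK xy)).
have [y0 _] := ex_y0.
pose v0 : 'I_p := Ordinal p_gt0.
pose Mf x (b : Kt) := blk2 (K (x, b.1.1) b.1.2) b.2.
pose Mb x (j : 'I_#|{: Kt}|) := Mf x (enum_val j).
have linGy : forall x, is_linear_map (fun X => \sum_y ptr2 (G (x, y) X)).
  move=> x; apply: lin_sumf => y; apply: lin_ptr2; exact: (hG.1 _).1.
have hKr : forall x X, kraus (blk1 (Yx x)) X = kraus (Mb x) X.
  move=> x X; rewrite -IK.
  rewrite (state_ext n_gt0 (lin_I x) (linGy x) (fun rho st => esym (hGI x rho st))).
  rewrite /kraus -(sum_enumv (fun b : (Kt : finType) => Mf x b *m X *m adj (Mf x b))).
  rewrite -(pair_bigA _ (fun yr v => Mf x (yr, v) *m X *m adj (Mf x (yr, v)))).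
  rewrite -(pair_bigA _ (fun y r => \sum_v Mf x ((y, r), v) *m X *m adj (Mf x ((y, r), v)))).
  apply: eq_bigr => y _; rewrite hK' ptr2_sum; apply: eq_bigr => r _.
  by rewrite ptr2_blk.
have hTN : forall x, exists TN : 'M[C]_(#|{: Kt}|, a) * 'M[C]_a,
   (forall k, Mb x k = \sum_i TN.1 k i *: blk1 (Yx x) i) /\
   1%:M - adj TN.1 *m TN.1 = TN.2 *m adj TN.2.
  move=> x; have [T [h1 [N h2]]] := douglas (hKr x); by exists (T, N).
pose TN x := epsilon (inhabits (0, 0)) (fun TN : 'M[C]_(#|{: Kt}|, a) * 'M[C]_a =>
   (forall k, Mb x k = \sum_i TN.1 k i *: blk1 (Yx x) i) /\
   1%:M - adj TN.1 *m TN.1 = TN.2 *m adj TN.2).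
have hTs : forall x, (forall k, Mb x k = \sum_i (TN x).1 k i *: blk1 (Yx x) i) /\
   1%:M - adj (TN x).1 *m (TN x).1 = (TN x).2 *m adj (TN x).2.
  by move=> x; apply: (epsilon_spec _ _ (hTN x)).
pose T x := (TN x).1; pose N x := (TN x).2.
have hT1 : forall x k, Mb x k = \sum_i T x k i *: blk1 (Yx x) i := fun x => (hTs x).1.
have hT2 : forall x, 1%:M - adj (T x) *m T x = N x *m adj (N x) := fun x => (hTs x).2.
clearbody T N.
pose t x (b : Kt) i := T x (enum_rank b) i.
have hMf : forall x b, Mf x b = \sum_i t x b i *: blk1 (Yx x) i.
  by move=> x b; rewrite /t -hT1 /Mb enum_rankK.
pose A x y (s : 'I_(n * (m * p)) + 'I_a) : 'M[C]_(p, a) :=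
  match s with
  | inl r => \matrix_(v, i) t x (y, r, v) i
  | inr i0 => if y == y0 then \matrix_(v, i) ((v == v0)%:R * (N x i i0)^*) else 0
  end.
have zeroN : forall x X, \sum_i0 \tr ((\sum_i (adj (N x)) i0 i *: blk1 (Yx x) i) *m X *m
     adj (\sum_i (adj (N x)) i0 i *: blk1 (Yx x) i)) = 0.
  move=> x X; rewrite gram_sum dgK -hT2.
  have gT := gram_sum (T x) (blk1 (Yx x)) X.
  have mxB : forall M N : 'M[C]_a, forall i j, (M - N) i j = M i j - N i j.
    by move=> *; rewrite !mxE.
  set c := fun i j => \tr (blk1 (Yx x) i *m X *m adj (blk1 (Yx x) j)).
  transitivity (\sum_i \sum_j (1%:M : 'M[C]_a) j i * c i j -
                \sum_i \sum_j (adj (T x) *m T x) j i * c i j).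
    rewrite -sumrB; apply: eq_bigr => i _; rewrite -sumrB; apply: eq_bigr => j _.
    by rewrite mxB mulrBl.
  rewrite /c -gT.
  have e1 : \sum_i \sum_j (1%:M : 'M[C]_a) j i *
      \tr (blk1 (Yx x) i *m X *m adj (blk1 (Yx x) j)) = \tr (kraus (blk1 (Yx x)) X).
    rewrite /kraus mxtrace_sum; apply: eq_bigr => i _.
    rewrite (bigD1 i) //= big1 ?addr0 => [|j /negPf ne]; last by rewrite mxE ne mul0r.
    by rewrite mxE eqxx mul1r.
  have e2 : \sum_k \tr ((\sum_i T x k i *: blk1 (Yx x) i) *m X *m
      adj (\sum_i T x k i *: blk1 (Yx x) i)) = \tr (kraus (Mb x) X).
    by rewrite /kraus mxtrace_sum; apply: eq_bigr => k _; rewrite hT1.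
  by rewrite e1 e2 hKr subrr.
exists (fun x y X => kraus (A x y) X); split.
- move=> x; apply: (kraus_instr (A := A x)) => //.
  under eq_bigr do rewrite big_sumType /=.
  rewrite big_split /=.
  have e1 : \sum_y \sum_r adj (A x y (inl r)) *m A x y (inl r) = adj (T x) *m T x.
    apply/matrixP => i j.
    transitivity (\sum_(b : Kt) (t x b i)^* * t x b j).
      rewrite summxE (sum_triple (fun b => (t x b i)^* * t x b j)).
      apply: eq_bigr => y _; rewrite summxE; apply: eq_bigr => r _.
      by rewrite mxE; apply: eq_bigr => v _; rewrite !mxE.
    rewrite sum_enumv mxE; apply: eq_bigr => b _; by rewrite /t enum_valK !mxE.
  have e2 : \sum_y \sum_i adj (A x y (inr i)) *m A x y (inr i) = N x *m adj (N x).
    rewrite (bigD1 y0) //= [X in _ + X]big1 ?addr0 => [|y /negPf ny]; last first.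
      by apply: big1 => i _; rewrite ny dg0 mul0mx.
    rewrite eqxx; apply/matrixP => i j; rewrite summxE mxE; apply: eq_bigr => k _.
    rewrite mxE (bigD1 v0) //= [X in _ + X]big1 ?addr0 => [|v /negPf nv]; last first.
      by rewrite !mxE nv !mul0r rmorph0 mul0r.
    by rewrite !mxE eqxx !mul1r conjCK.
  by rewrite e1 e2 -hT2 addrC subrK.
- move=> y X.
  have linJy : is_linear_map (J y) := (hJ.1 y).1.
  have linGx : is_linear_map (fun X => \sum_x ptr1 (G (x, y) X)).
    apply: lin_sumf => x; apply: lin_ptr1; exact: (hG.1 _).1.
  rewrite (state_ext n_gt0 linJy linGx (fun rho st => esym (hGJ y rho st))).
  apply: eq_bigr => x _.
  rewrite hK' /kraus ptr1_sum big_sumType /=.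
  have e0 : \sum_i A x y (inr i) *m complementary W E x X *m adj (A x y (inr i)) = 0.
    case: (eqVneq y y0) => [ey|ny]; last first.
      by apply: big1 => i _; rewrite /= (negPf ny) !mul0mx.
    rewrite ey /= eqxx compY ptr2_tr.
    under eq_bigr do rewrite conj_gram.
    have hF : forall i v, \sum_j (\matrix_(v, j) ((v == v0)%:R * (N x j i)^*)) v j *:
         blk1 (Yx x) j = (v == v0)%:R *: \sum_j (adj (N x)) i j *: blk1 (Yx x) j.
      by move=> i v; rewrite scaler_sumr; apply: eq_bigr => j _; rewrite !mxE scalerA.
    apply/matrixP => v v'; rewrite summxE [RHS]mxE.
    under eq_bigr do rewrite mxE !hF dgZ -!scalemxAl -scalemxAr !mxtraceZ.
    by rewrite -mulr_sumr -mulr_sumr zeroN !mulr0.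
  rewrite e0 addr0; apply: eq_bigr => r _.
  rewrite ptr1_tr compY ptr2_tr conj_gram.
  have hv : forall v, \sum_i (\matrix_(v1, i0) t x (y, r, v1) i0) v i *: blk1 (Yx x) i
      = blk2 (K (x, y) r) v.
    move=> v; rewrite -[blk2 _ v]/(Mf x (y, r, v)) hMf.
    by apply: eq_bigr => i _; rewrite mxE.
  by apply/matrixP => v v'; rewrite !mxE !hv.
Qed.

End Main.

End Helpers.
Import Helpers.

Theorem proposition7 (C : numClosedFieldType) (Omega Lambda : finType)
  (n m p a : nat) (n_gt0 : (0 < n)%N)
  (I : Omega -> 'M[C]_n -> 'M[C]_m) (J : Lambda -> 'M[C]_n -> 'M[C]_p)
  (W : 'M[C]_(a * m, n)) (E : Omega -> 'M[C]_a) :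
  instrument I -> instrument J -> dilation I W E ->
  (compatible I J <-> postprocessing J (complementary W E)).
Proof.
move=> hI hJ hD; split.
- exact: (dir2 n_gt0 hI hJ hD).
- exact: (dir1 hD).
Qed.
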